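(* Let $C$ be a commutative ring, let $X,Y$ be disjoint sets with $|X|=|Y|=n$, and let $S_{2n}$ be the symmetric group on $X\cup Y$. For $Z\subseteq X$ put $P(Z)=\sum_{\sigma\in S_{2n},\ \sigma(Z)\subseteq Y}\operatorname{sgn}(\sigma)\,\sigma\in C[S_{2n}]$. Then $$\sum_{Z\subseteq X}(-1)^{|Z|}P(Z)=\sum_{\sigma\in S_{2n},\ \sigma(X)=X}\operatorname{sgn}(\sigma)\,\sigma.$$ *)

(* Defs.v *)
From HB Require Import structures.
From mathcomp Require Import all_boot all_order all_algebra all_fingroup.
Set Implicit Arguments. Unset Strict Implicit. Unset Printing Implicit Defensive.
Import GRing.Theory.
Local Open Scope ring_scope.

(* The group ring C[Sym(T)] as a (free) C-module: an element sum_s c_s s is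
   represented by its coefficient function {ffun {perm T} -> C^o}
   (C^o = C viewed as a module over itself).  Only the module structure
   (sums and scalar multiples) is needed for the statement. *)
Definition group_ring (C : comPzRingType) (T : finType) :=
  {ffun {perm T} -> C^o}.

Definition gr_basis (C : comPzRingType) (T : finType) (s : {perm T})
  : group_ring C T := [ffun t => (t == s)%:R].

Definition Pgr (C : comPzRingType) (T : finType) (Y Z : {set T})
  : group_ring C T :=
  \sum_(s : {perm T} | s @: Z \subset Y) (-1) ^+ odd_perm s *: gr_basis C s.

(* Main.v *)
Require Import Defs.
From HB Require Import structures.
From mathcomp Require Import all_boot all_order all_algebra all_fingroup.
Import GRing.Theory.
Local Open Scope ring_scope.

Lemma alt_sum (C : comPzRingType) (T : finType) (A : {set T}) :
  \sum_(Z : {set T} | Z \subset A) (-1) ^+ #|Z| = (A == set0)%:R :> C.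
Proof.
have [->|[a aA]] := set_0Vmem A.
  rewrite eqxx (big_pred1 set0) ?cards0 // => Z; by rewrite subset0.
have -> : (A == set0) = false by apply/negbTE/set0Pn; exists a.
rewrite (bigID (fun Z : {set T} => a \in Z)) /=.
pose h (Z : {set T}) := if a \in Z then Z :\ a else a |: Z.
have hK : involutive h.
  move=> Z; rewrite /h; have [aZ|aZ] := boolP (a \in Z); rewrite ?aZ.
    by rewrite setD11 setD1K.
  by rewrite setU11 setU1K.
rewrite [X in _ + X](reindex_inj (inv_inj hK)) /=.
have E Z : (h Z \subset A) && (a \notin h Z) = (Z \subset A) && (a \in Z).
  rewrite /h; have [aZ|aZ] := boolP (a \in Z); rewrite ?aZ.
    rewrite in_setD1 eqxx !andbT; apply/idP/idP => H.
      by rewrite -(setD1K aZ) subUset sub1set aA H.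
    exact: subset_trans (subD1set _ _) H.
  by rewrite setU11 !andbF.
rewrite (eq_bigl _ _ E).
rewrite -big_split /= big1 // => Z /andP[ZA aZ].
rewrite /h aZ (cardsD1 a Z) aZ exprS mulN1r addNr //.
Qed.

Theorem proposition2p37 (C : comPzRingType) (T : finType) (X Y : {set T}) (n : nat)
  (hdisj : [disjoint X & Y]) (hcov : X :|: Y = [set: T])
  (hX : #|X| = n) (hY : #|Y| = n) :
  \sum_(Z : {set T} | Z \subset X) (-1) ^+ #|Z| *: Pgr C Y Z
  = \sum_(s : {perm T} | s @: X == X) (-1) ^+ odd_perm s *: gr_basis C s.
Proof.
rewrite /Pgr.
under eq_bigr => Z _ do rewrite scaler_sumr.
rewrite (exchange_big_dep xpredT) //=.
under eq_bigr => s _ do rewrite -scaler_suml.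
rewrite [RHS]big_mkcond /=; apply: eq_bigr => s _.
pose A := [set x in X | s x \in Y].
have E (Z : {set T}) : (Z \subset X) && (s @: Z \subset Y) = (Z \subset A).
  apply/idP/idP => [/andP[ZX sZY]|H].
    by apply/subsetP => z zZ; rewrite inE (subsetP ZX) // (subsetP sZY) // imset_f.
  apply/andP; split; apply/subsetP => z.
    by move/(subsetP H); rewrite inE => /andP[].
  by case/imsetP => x /(subsetP H); rewrite inE => /andP[_ ?] ->.
rewrite (eq_bigl _ _ E) alt_sum.
have -> : (A == set0) = (s @: X == X).
  apply/idP/idP => [/eqP A0|/eqP H].
    rewrite eqEcard card_imset ?leqnn ?andbT; last exact: perm_inj.
    apply/subsetP => y /imsetP[x xX ->].
    have : s x \in X :|: Y by rewrite hcov inE.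
    rewrite inE; case/orP => // sxY.
    have : x \in A by rewrite inE xX sxY.
    by rewrite A0 inE.
  apply/eqP/setP => x; rewrite inE in_set0; apply/negbTE/andP => -[xX sxY].
  have sxX : s x \in X by rewrite -H imset_f.
  by rewrite (disjointFr hdisj sxX) in sxY.
by case: eqP => _; rewrite ?scale1r ?scale0r.
Qed.
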